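(* Let $S\le T_n$ be a transformation monoid and $G$ the normalizer of $S$ in $S_n$. Then $SG$ is regular if and only if $S$ is regular.
   Context: A transformation monoid is a subsemigroup of $T_n$ containing the identity map; $G=\{g\in S_n:g^{-1}Sg=S\}$ and $SG=\{sg:s\in S,g\in G\}$, a semigroup. A semigroup $U$ is regular if for every $a\in U$ there exists $a'\in U$ with $a=aa'a$. *)

(* Defs.v *)
From mathcomp Require Import all_boot all_fingroup.
Set Implicit Arguments. Unset Strict Implicit. Unset Printing Implicit Defensive.

Definition transf (n : nat) := {ffun 'I_n -> 'I_n}.

(* Composition, written left-to-right as usual for semigroups: (a*b)(x) = b(a(x)). *)
Definition tmul n (a b : transf n) : transf n := [ffun x => b (a x)].
Definition tid n : transf n := [ffun x => x].

Definition perm_tr n (g : {perm 'I_n}) : transf n := [ffun x => g x].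

Definition is_transf_monoid n (S : {set transf n}) : Prop :=
  tid n \in S /\ (forall a b, a \in S -> b \in S -> tmul a b \in S).

Definition conj_set n (S : {set transf n}) (g : {perm 'I_n}) : {set transf n} :=
  [set tmul (tmul (perm_tr g^-1) s) (perm_tr g) | s in S].

Definition normalizerS n (S : {set transf n}) : {set {perm 'I_n}} :=
  [set g : {perm 'I_n} | conj_set S g == S].

Definition SGset n (S : {set transf n}) : {set transf n} :=
  [set tmul s (perm_tr g) | s in S, g in normalizerS S].

Definition regular n (U : {set transf n}) : Prop :=
  forall a, a \in U -> exists2 a', a' \in U & a = tmul (tmul a a') a.

(* Main.v *)
Require Import Defs.
From mathcomp Require Import all_boot all_fingroup.
Set Implicit Arguments. Unset Strict Implicit. Unset Printing Implicit Defensive.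

Local Open Scope group_scope.
Section Aux.
Variable n : nat.
Implicit Types (a b c : transf n) (g h : {perm 'I_n}).

Lemma tmulA a b c : tmul (tmul a b) c = tmul a (tmul b c).
Proof. by apply/ffunP => x; rewrite !ffunE. Qed.
Lemma tmul1 a : tmul a (tid n) = a.
Proof. by apply/ffunP => x; rewrite !ffunE. Qed.
Lemma tmul1l a : tmul (tid n) a = a.
Proof. by apply/ffunP => x; rewrite !ffunE. Qed.
Lemma perm_trM g h : perm_tr (g * h) = tmul (perm_tr g) (perm_tr h).
Proof. by apply/ffunP => x; rewrite !ffunE permM. Qed.
Lemma perm_tr1 : perm_tr 1 = tid n.
Proof. by apply/ffunP => x; rewrite !ffunE perm1. Qed.
Lemma perm_trVK g : tmul (perm_tr g^-1) (perm_tr g) = tid n.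
Proof. by rewrite -perm_trM mulVg perm_tr1. Qed.
Lemma perm_trKV g : tmul (perm_tr g) (perm_tr g^-1) = tid n.
Proof. by rewrite -perm_trM mulgV perm_tr1. Qed.

Variable S : {set transf n}.

Lemma Ginv g : g \in normalizerS S -> g^-1 \in normalizerS S.
Proof.
rewrite !inE => /eqP H; apply/eqP/setP => u; apply/idP/idP.
- case/imsetP => s Hs ->; rewrite invgK.
  move: Hs; rewrite -{1}H => /imsetP [v Hv ->].
  by rewrite (_ : tmul _ _ = v) //; apply/ffunP => x; rewrite !ffunE ?permK ?permKV.
- move=> Hu.
  have : tmul (tmul (perm_tr g^-1) u) (perm_tr g) \in S by rewrite -H; apply/imsetP; exists u.
  move=> Hv; apply/imsetP; exists (tmul (tmul (perm_tr g^-1) u) (perm_tr g)) => //.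
  by rewrite invgK; apply/ffunP => x; rewrite !ffunE ?permK ?permKV.
Qed.

Lemma push h w : h \in normalizerS S -> w \in S ->
  exists2 w', w' \in S & tmul (perm_tr h) w = tmul w' (perm_tr h).
Proof.
move=> Hh Hw; move: (Ginv Hh); rewrite inE => /eqP H.
exists (tmul (tmul (perm_tr h) w) (perm_tr h^-1)).
  by rewrite -H; apply/imsetP; exists w => //; rewrite invgK.
by apply/ffunP => x; rewrite !ffunE ?permK ?permKV.
Qed.

Lemma push_pow h k w : h \in normalizerS S -> w \in S ->
  exists2 w', w' \in S & tmul (perm_tr (h ^+ k)) w = tmul w' (perm_tr (h ^+ k)).
Proof.
move=> Hh; elim: k w => [|k IH] w Hw.
  by exists w => //; rewrite expg0 perm_tr1 tmul1 tmul1l.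
rewrite expgSr perm_trM.
have [w1 Hw1 E1] := push Hh Hw.
have [w2 Hw2 E2] := IH w1 Hw1.
by exists w2 => //; rewrite tmulA E1 -tmulA E2 tmulA.
Qed.

End Aux.

Theorem corollary4p5 (n : nat) (S : {set transf n}) :
  is_transf_monoid S -> (regular (SGset S) <-> regular S).
Proof.
case=> Hid Hmul; split => Hreg.
- move=> s Hs.
  have Hsg : s \in SGset S.
    apply/imset2P; exists s 1 => //; last by rewrite perm_tr1 tmul1.
    rewrite inE; apply/eqP/setP => u; apply/idP/idP.
    + by case/imsetP => v Hv ->; rewrite invg1 perm_tr1 tmul1 tmul1l.
    + by move=> Hu; apply/imsetP; exists u => //; rewrite invg1 perm_tr1 tmul1 tmul1l.
  have [x0 /imset2P [t h Ht Hh ->] Ex] := Hreg s Hsg.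
  set x := tmul t (perm_tr h) in Ex.
  pose f j := iter j (fun y => tmul y (tmul s x)) x.
  have B : forall j, tmul (tmul s (f j)) s = s.
    elim=> [|j IH]; first by rewrite /f /= -Ex.
    rewrite [f j.+1]/f iterS -/(f j).
    have Ex' : tmul s (tmul x s) = s by rewrite -tmulA -Ex.
    rewrite -[in RHS]IH; have -> : tmul (tmul s (tmul (f j) (tmul s x))) s = tmul (tmul s (f j)) (tmul s (tmul x s)) by rewrite !tmulA.
    by rewrite Ex'.
  have A : forall j, exists2 w, w \in S & f j = tmul w (perm_tr (h ^+ j.+1)).
    elim=> [|j [w Hw IH]]; first by exists t => //; rewrite expg1.
    rewrite [f j.+1]/f iterS -/(f j) IH.
    have [s1 Hs1 E1] := push_pow j.+1 Hh Hs.
    have [t1 Ht1 E2] := push_pow j.+1 Hh Ht.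
    exists (tmul (tmul w s1) t1); first by rewrite !Hmul.
    rewrite /x [h ^+ j.+2]expgSr perm_trM !tmulA.
    rewrite -[tmul (perm_tr (h ^+ j.+1)) (tmul s _)]tmulA E1 !tmulA.
    by rewrite -[tmul (perm_tr (h ^+ j.+1)) (tmul t _)]tmulA E2 !tmulA.
  have [w Hw Ew] := A (#[h].-1).
  exists w => //.
  have Bj := B #[h].-1; rewrite Ew prednK ?order_gt0 // expg_order perm_tr1 tmul1 in Bj.
  by rewrite {1}Bj.
- move=> a /imset2P [s g Hs Hg ->].
  have [s' Hs' E] := Hreg s Hs.
  have HgV := Ginv Hg.
  move: (Hg); rewrite inE => /eqP H.
  exists (tmul (tmul (tmul (perm_tr g^-1) s') (perm_tr g)) (perm_tr g^-1)).
    apply/imset2P; exists (tmul (tmul (perm_tr g^-1) s') (perm_tr g)) g^-1 => //.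
    by rewrite -H; apply/imsetP; exists s'.
  rewrite {1}E; apply/ffunP => x; rewrite !ffunE.
  by rewrite ?ffunE ?permK.
Qed.
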